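(* Let $\phi$ be one of the two numbers $\frac{-1\pm\sqrt5}{2}$. In $\mathbb{C}\mathbb{P}^2$ with homogeneous coordinates $[x:y:z]$ consider the lines $L_1: z=0$, $L_2: x=0$, $L_3: x-z=0$, $L_4: y=0$, $L_5: y-z=0$, $L_6: x-y=0$, $L_7: x+\phi y-z=0$, $L_8: \phi x-\phi y+z=0$, $L_9: -\phi x+(\phi-1)y=0$, $L_{10}: x-\phi z=0$, and $L^1_{11}: (\phi+2)x-(\phi+1)y+\phi z=0$, $L^1_{12}: (\phi-1)x-\phi y+(2\phi-1)z=0$, $L^1_{13}: (-2\phi+1)x+(-3\phi+2)y+(\phi-1)z=0$, $L^2_{11}: (\phi+2)x-(\phi+3)y+(\phi+2)z=0$, $L^2_{12}: -(\phi+1)x+(\phi-2)y+z=0$, $L^2_{13}: -x+(-\phi+2)y-(\phi+1)z=0$. Let $\mathcal{B}_1=\{L_1,\dots,L_{10},L^1_{11},L^1_{12},L^1_{13}\}$ and $\mathcal{B}_2=\{L_1,\dots,L_{10},L^2_{11},L^2_{12},L^2_{13}\}$. Then $\mathcal{B}_1$ and $\mathcal{B}_2$ form a (real) nonarithmetic pair defined over $\mathbb{Q}(\sqrt5)$.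
   Context: A line arrangement is a finite set of distinct lines in $\mathbb{C}\mathbb{P}^2$. Its combinatorics is the pair $(\mathcal{A},\mathrm{sing}(\mathcal{A}))$ where each singular point is identified with the set of lines of $\mathcal{A}$ through it. Two arrangements are lattice isomorphic if some bijection between their lines induces a bijection between their sets of singular points. The moduli space $\mathcal{M}(\mathcal{C})$ of a combinatorics $\mathcal{C}$ is the set of arrangements with combinatorics $\mathcal{C}$ modulo $\mathrm{PGL}_3(\mathbb{C})$. A pair of arrangements means two lattice isomorphic arrangements lying in different connected components of their common moduli space. The definition field $\mathbb{F}(\mathcal{A})$ is the number field generated by the coefficients of the lines of $\mathcal{A}$. A field automorphism $\sigma$ acts on a line $ax+by+cz=0$ by $\sigma(a)x+\sigma(b)y+\sigma(c)z=0$, and on an arrangement line by line. A pair $\mathcal{A}_1,\mathcal{A}_2$ is arithmetic if, for a number field $\mathbb{F}$ containing both definition fields, some $\sigma\in\mathrm{Gal}(\mathbb{F}/\mathbb{Q})$ satisfies $\sigma\cdot\mathcal{A}_1=\mathcal{A}_2$; it is nonarithmetic otherwise. *)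

(* Defs.v *)
From HB Require Import structures.
From mathcomp Require Import all_boot all_order all_algebra all_field.
From mathcomp Require Import complex reals.
Set Implicit Arguments. Unset Strict Implicit. Unset Printing Implicit Defensive.
Import Order.TTheory GRing.Theory Num.Theory.
Local Open Scope ring_scope.

Section LineArrangements.
Variable R : realType.
Local Notation C := R[i].

(* A line a x + b y + c z = 0 of CP^2 is given by its coefficient row (a,b,c);
   a point [x:y:z] by a nonzero row (x,y,z).  An (ordered) arrangement of n
   lines is a map 'I_n -> 'rV[C]_3. *)
Definition line_of (a b c : C) : 'rV[C]_3 := \row_(k < 3) nth 0 [:: a; b; c] k.

Definition on_line (l p : 'rV[C]_3) : bool := (l *m p^T) 0 0 == 0.

Definition same_line (u v : 'rV[C]_3) : Prop := exists k : C, k != 0 /\ v = k *: u.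

Definition is_arr n (A : 'I_n -> 'rV[C]_3) : Prop :=
  (forall i, A i != 0) /\ (forall i j, i != j -> ~ same_line (A i) (A j)).

Definition lines_through n (A : 'I_n -> 'rV[C]_3) (p : 'rV[C]_3) : {set 'I_n} :=
  [set i | on_line (A i) p].

(* S is (the set of lines through) a singular point of A *)
Definition sing n (A : 'I_n -> 'rV[C]_3) (S : {set 'I_n}) : Prop :=
  exists p : 'rV[C]_3, p != 0 /\ S = lines_through A p /\ (1 < #|S|)%N.

(* A and B are lattice isomorphic via the labelling i |-> i, i.e. they have the
   same (labelled) combinatorics *)
Definition same_comb n (A B : 'I_n -> 'rV[C]_3) : Prop :=
  forall S, sing A S <-> sing B S.

Definition realization n (Aref A : 'I_n -> 'rV[C]_3) : Prop :=
  is_arr A /\ same_comb Aref A.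

(* projective equivalence (action of PGL_3(C), and rescaling of each
   coefficient row, which does not change the line) *)
Definition proj_equiv n (A B : 'I_n -> 'rV[C]_3) : Prop :=
  exists g : 'M[C]_3, g \in unitmx /\ forall i, same_line (A i *m g) (B i).

(* Euclidean topology on the realisation space X (a subspace of (C^3)^n) *)
Definition rel_open n (X U : ('I_n -> 'rV[C]_3) -> Prop) : Prop :=
  (forall A, U A -> X A) /\
  forall A, U A -> exists e : C, 0 < e /\
    forall B, X B -> (forall i k, `|B i 0 k - A i 0 k| < e) -> U B.

Definition saturated n (X U : ('I_n -> 'rV[C]_3) -> Prop) : Prop :=
  forall A B, X A -> X B -> proj_equiv A B -> U A -> U B.

(* The moduli space M = X / proj_equiv carries the quotient topology: its
   subsets (resp. open subsets) correspond to saturated subsets (resp.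
   saturated relatively open subsets) of X.  [connected_in_moduli X S] says
   that the image of the saturated set S in M is connected. *)
Definition connected_in_moduli n (X S : ('I_n -> 'rV[C]_3) -> Prop) : Prop :=
  ~ exists U V : ('I_n -> 'rV[C]_3) -> Prop,
      [/\ rel_open X U /\ saturated X U, rel_open X V /\ saturated X V,
          (forall A, S A -> U A \/ V A),
          (forall A, S A -> U A -> V A -> False) &
          (exists A, S A /\ U A) /\ (exists A, S A /\ V A)].

Definition same_component n (X : ('I_n -> 'rV[C]_3) -> Prop)
    (A1 A2 : 'I_n -> 'rV[C]_3) : Prop :=
  exists S : ('I_n -> 'rV[C]_3) -> Prop,
    [/\ forall A, S A -> X A, saturated X S, connected_in_moduli X S,
        S A1 & S A2].

Definition is_pair n (A1 A2 : 'I_n -> 'rV[C]_3) : Prop :=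
  [/\ is_arr A1, is_arr A2, same_comb A1 A2 &
      ~ same_component (realization A1) A1 A2].

Definition same_arr n (A B : 'I_n -> 'rV[C]_3) : Prop :=
  (forall i, exists j, same_line (A i) (B j)) /\
  (forall j, exists i, same_line (A i) (B j)).

(* Arithmetic pair: for a number field F (a finite extension of Q, embedded in
   C by iota) containing the coefficients of both arrangements, some
   automorphism sigma of F maps A1 to A2 (acting on coefficients). *)
Definition arithmetic n (A1 A2 : 'I_n -> 'rV[C]_3) : Prop :=
  exists (F : fieldExtType rat) (iota : {rmorphism F -> C})
         (sigma : {rmorphism F -> F}) (A1' A2' : 'I_n -> 'rV[F]_3),
    [/\ bijective sigma,
        forall i, map_mx iota (A1' i) = A1 i,
        forall i, map_mx iota (A2' i) = A2 i &
        same_arr (fun i => map_mx (iota \o sigma) (A1' i)) A2].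

Definition nonarithmetic_pair n (A1 A2 : 'I_n -> 'rV[C]_3) : Prop :=
  is_pair A1 A2 /\ ~ arithmetic A1 A2.

Definition real_arr n (A : 'I_n -> 'rV[C]_3) : Prop :=
  forall i k, A i 0 k \is Num.real.

Definition sqrt5 : C := ((Num.sqrt (5 : R))%:C)%C.

(* membership in the definition field: the subfield of C generated by the
   coefficients of the lines *)
Definition subfield_closedP (P : C -> Prop) : Prop :=
  [/\ P 1, (forall x y, P x -> P y -> P (x - y)),
      (forall x y, P x -> P y -> P (x * y)) & (forall x, P x -> P x^-1)].

Definition in_def_field n (A : 'I_n -> 'rV[C]_3) (z : C) : Prop :=
  forall P : C -> Prop, subfield_closedP P -> (forall i k, P (A i 0 k)) -> P z.

Definition def_field_Qsqrt5 n (A : 'I_n -> 'rV[C]_3) : Prop :=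
  forall z, in_def_field A z <-> exists a b : rat, z = ratr a + ratr b * sqrt5.

Definition common_lines (phi : C) : seq 'rV[C]_3 :=
  [:: line_of 0 0 1; line_of 1 0 0; line_of 1 0 (-1); line_of 0 1 0;
      line_of 0 1 (-1); line_of 1 (-1) 0; line_of 1 phi (-1);
      line_of phi (- phi) 1; line_of (- phi) (phi - 1) 0; line_of 1 0 (- phi)].

Definition B1_lines (phi : C) : seq 'rV[C]_3 :=
  [:: line_of (phi + 2) (- (phi + 1)) phi;
      line_of (phi - 1) (- phi) (2 * phi - 1);
      line_of (- (2 * phi) + 1) (- (3 * phi) + 2) (phi - 1)].

Definition B2_lines (phi : C) : seq 'rV[C]_3 :=
  [:: line_of (phi + 2) (- (phi + 3)) (phi + 2);
      line_of (- (phi + 1)) (phi - 2) 1;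
      line_of (-1) (- phi + 2) (- (phi + 1))].

Definition B1 (phi : C) : 'I_13 -> 'rV[C]_3 :=
  fun i => nth 0 (common_lines phi ++ B1_lines phi) i.
Definition B2 (phi : C) : 'I_13 -> 'rV[C]_3 :=
  fun i => nth 0 (common_lines phi ++ B2_lines phi) i.

End LineArrangements.

(* Main.v *)
Require Import Defs.
From HB Require Import structures.
From mathcomp Require Import all_boot all_order all_algebra all_field.
From mathcomp Require Import complex reals.
From mathcomp Require Import ring lra zify.
From Stdlib Require Import FunctionalExtensionality.
Set Implicit Arguments. Unset Strict Implicit. Unset Printing Implicit Defensive.
Import Order.TTheory GRing.Theory Num.Theory.
Local Open Scope ring_scope.

Definition zp := (int * int)%type.
Definition sadd (x y : zp) : zp := (x.1 + y.1, x.2 + y.2).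
Definition ssub (x y : zp) : zp := (x.1 - y.1, x.2 - y.2).
Definition smul (x y : zp) : zp := (x.1 * y.1 + x.2 * y.2, x.1 * y.2 + x.2 * y.1 - x.2 * y.2).
Definition sv := (zp * zp * zp)%type.
Definition sdot (u w : sv) : zp :=
  sadd (sadd (smul u.1.1 w.1.1) (smul u.1.2 w.1.2)) (smul u.2 w.2).
Definition scross (u v : sv) : sv :=
  (ssub (smul u.1.2 v.2) (smul u.2 v.1.2),
   ssub (smul u.2 v.1.1) (smul u.1.1 v.2),
   ssub (smul u.1.1 v.1.2) (smul u.1.2 v.1.1)).
Definition z0 : zp := (0, 0).
Definition sdef : sv := (z0, z0, z0).
Definition svnz (u : sv) : bool := [|| u.1.1 != z0, u.1.2 != z0 | u.2 != z0].
Notation "[ 'v' a , b , c ]" := ((a, b, c) : sv).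
Definition symcommon : seq sv :=
  [:: [v (0,0), (0,0), (1,0)]; [v (1,0), (0,0), (0,0)]; [v (1,0), (0,0), (-1,0)];
      [v (0,0), (1,0), (0,0)]; [v (0,0), (1,0), (-1,0)]; [v (1,0), (-1,0), (0,0)];
      [v (1,0), (0,1), (-1,0)]; [v (0,1), (0,-1), (1,0)]; [v (0,-1), (-1,1), (0,0)];
      [v (1,0), (0,0), (0,-1)]].
Definition symB1 : seq sv := symcommon ++
  [:: [v (2,1), (-1,-1), (0,1)]; [v (-1,1), (0,-1), (-1,2)]; [v (1,-2), (2,-3), (-1,1)]].
Definition symB2 : seq sv := symcommon ++
  [:: [v (2,1), (-3,-1), (2,1)]; [v (-1,-1), (-2,1), (1,0)]; [v (-1,0), (2,-1), (-1,-1)]].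
Definition sl (s : seq sv) (n : nat) := nth sdef s n.
Definition onl (s : seq sv) (i j l : nat) : bool :=
  sdot (sl s l) (scross (sl s i) (sl s j)) == z0.
Definition I13 := iota 0 13.
Definition chk_comb : bool :=
  all (fun i => all (fun j => all (fun l => onl symB1 i j l == onl symB2 i j l) I13) I13) I13.
Lemma chk_combT : chk_comb. Proof. by vm_compute. Qed.
Definition chk_arr (s : seq sv) : bool :=
  all (fun i => svnz (sl s i) && all (fun j => (i == j) || svnz (scross (sl s i) (sl s j))) I13) I13.
Lemma chk_arr1 : chk_arr symB1. Proof. by vm_compute. Qed.
Lemma chk_arr2 : chk_arr symB2. Proof. by vm_compute. Qed.

Definition i0 : 'I_3 := @Ordinal 3 0 isT.
Definition i1 : 'I_3 := @Ordinal 3 1 isT.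
Definition i2 : 'I_3 := @Ordinal 3 2 isT.

Section Vec.
Variable R : realType.
Local Notation C := R[i].
Implicit Types u v w p : 'rV[C]_3.
Definition c0 u := u 0 i0.
Definition c1 u := u 0 i1.
Definition c2 u := u 0 i2.
Lemma c0E (a b c : C) : c0 (line_of a b c) = a. Proof. by rewrite /c0 mxE. Qed.
Lemma c1E (a b c : C) : c1 (line_of a b c) = b. Proof. by rewrite /c1 mxE. Qed.
Lemma c2E (a b c : C) : c2 (line_of a b c) = c. Proof. by rewrite /c2 mxE. Qed.
Lemma rV3E u : u = line_of (c0 u) (c1 u) (c2 u).
Proof.
apply/rowP => k; rewrite mxE /c0 /c1 /c2.
case: k => [[|[|[|k]]] hk] //=; congr (u _ _); exact: val_inj.
Qed.
Lemma line_of_eq (a b c a' b' c' : C) : line_of a b c = line_of a' b' c' -> [/\ a = a', b = b' & c = c'].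
Proof. by move=> h; split; [move: (c0E a b c) | move: (c1E a b c) | move: (c2E a b c)]; rewrite h ?c0E ?c1E ?c2E. Qed.
Lemma line_of0 u : (u == 0) = [&& c0 u == 0, c1 u == 0 & c2 u == 0].
Proof.
apply/eqP/and3P => [->|[/eqP h0 /eqP h1 /eqP h2]]; first by rewrite /c0 /c1 /c2 !mxE.
by rewrite (rV3E u) h0 h1 h2; apply/rowP => k; rewrite !mxE; case: k => [[|[|[|k]]] hk].
Qed.
Lemma line_of_congr (a b c a' b' c' : C) : a = a' -> b = b' -> c = c' -> line_of a b c = line_of a' b' c'.
Proof. by move=> -> -> ->. Qed.
Definition dot u p := c0 u * c0 p + c1 u * c1 p + c2 u * c2 p.
Lemma sum3 (f : 'I_3 -> C) : \sum_k f k = f i0 + f i1 + f i2.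
Proof. rewrite !big_ord_recr big_ord0 /= add0r; congr (f _ + f _ + f _); exact: val_inj. Qed.
Lemma on_lineE l p : on_line l p = (dot l p == 0).
Proof. by rewrite /on_line /dot !mxE sum3 !mxE. Qed.
Lemma line_ofZ (k a b c : C) : k *: line_of a b c = line_of (k * a) (k * b) (k * c).
Proof. by apply/rowP => j; rewrite !mxE; case: j => [[|[|[|j]]] hj]. Qed.
Lemma c0Z k u : c0 (k *: u) = k * c0 u. Proof. by rewrite /c0 mxE. Qed.
Lemma c1Z k u : c1 (k *: u) = k * c1 u. Proof. by rewrite /c1 mxE. Qed.
Lemma c2Z k u : c2 (k *: u) = k * c2 u. Proof. by rewrite /c2 mxE. Qed.
Definition crossv u v := line_of (c1 u * c2 v - c2 u * c1 v) (c2 u * c0 v - c0 u * c2 v)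
   (c0 u * c1 v - c1 u * c0 v).
Definition br u v w := dot w (crossv u v).
End Vec.

Section Gen.
Variable R : realType.
Local Notation C := R[i].
Implicit Types u v w p l : 'rV[C]_3.

Lemma same_line_cross u v : same_line u v -> crossv u v = 0.
Proof.
case=> k [_ ->]; rewrite /crossv !c0Z !c1Z !c2Z.
apply/rowP => j; rewrite !mxE; case: j => [[|[|[|j]]] hj] //=; ring.
Qed.

Lemma nz_coord p : p != 0 -> [\/ c0 p != 0, c1 p != 0 | c2 p != 0].
Proof.
rewrite line_of0 !negb_and => /orP [h|/orP [h|h]]; [exact: Or31 | exact: Or32 | exact: Or33].
Qed.

Lemma point_cross u v p : dot u p = 0 -> dot v p = 0 -> p != 0 -> crossv u v != 0 ->
  exists2 lam : C, lam != 0 & forall l, dot l p = lam * dot l (crossv u v).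
Proof.
move=> hu hv hp hw; set w := crossv u v.
have e01 : c0 p * c1 w - c1 p * c0 w = 0.
  have -> : c0 p * c1 w - c1 p * c0 w = c2 u * dot v p - c2 v * dot u p
    by rewrite /w /crossv c0E c1E /dot; ring.
  by rewrite hu hv !mulr0 subr0.
have e02 : c0 p * c2 w - c2 p * c0 w = 0.
  have -> : c0 p * c2 w - c2 p * c0 w = c1 v * dot u p - c1 u * dot v p
    by rewrite /w /crossv c0E c2E /dot; ring.
  by rewrite hu hv !mulr0 subr0.
have e12 : c1 p * c2 w - c2 p * c1 w = 0.
  have -> : c1 p * c2 w - c2 p * c1 w = c0 u * dot v p - c0 v * dot u p
    by rewrite /w /crossv c1E c2E /dot; ring.
  by rewrite hu hv !mulr0 subr0.
have gen : forall (wm pm : C), wm != 0 ->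
   c0 p * wm = pm * c0 w -> c1 p * wm = pm * c1 w -> c2 p * wm = pm * c2 w ->
   exists2 lam : C, lam != 0 & forall l, dot l p = lam * dot l w.
  move=> wm pm hwm h0 h1 h2; exists (pm / wm).
    apply/negP => /eqP h.
    have hpm : pm = 0.
      by move: h => /eqP; rewrite mulf_eq0 invr_eq0 (negbTE hwm) orbF => /eqP.
    have : p == 0.
      rewrite line_of0; apply/and3P; split; apply/eqP; apply: (mulIf hwm).
      - by rewrite h0 hpm !mul0r.
      - by rewrite h1 hpm !mul0r.
      - by rewrite h2 hpm !mul0r.
    by rewrite (negbTE hp).
  move=> l; rewrite /dot.
  have -> : c0 p = pm / wm * c0 w by apply: (mulIf hwm); rewrite h0; field.
  have -> : c1 p = pm / wm * c1 w by apply: (mulIf hwm); rewrite h1; field.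
  have -> : c2 p = pm / wm * c2 w by apply: (mulIf hwm); rewrite h2; field.
  ring.
case: (nz_coord hw) => hc.
- apply: (gen _ (c0 p) hc); first by ring.
  + by apply: subr0_eq; rewrite -[X in _ = X]oppr0 -e01; ring.
  + by apply: subr0_eq; rewrite -[X in _ = X]oppr0 -e02; ring.
- apply: (gen _ (c1 p) hc).
  + by apply: subr0_eq; rewrite -e01.
  + by ring.
  + by apply: subr0_eq; rewrite -[X in _ = X]oppr0 -e12; ring.
- apply: (gen _ (c2 p) hc).
  + by apply: subr0_eq; rewrite -e02.
  + by apply: subr0_eq; rewrite -e12.
  + by ring.
Qed.

Lemma dot_cross_l u v : dot u (crossv u v) = 0.
Proof. by rewrite /dot /crossv c0E c1E c2E; ring. Qed.
Lemma dot_cross_r u v : dot v (crossv u v) = 0.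
Proof. by rewrite /dot /crossv c0E c1E c2E; ring. Qed.

Definition cross_nz n (A : 'I_n -> 'rV[C]_3) := forall i j, i != j -> crossv (A i) (A j) != 0.

Lemma sing_char n (A : 'I_n -> 'rV[C]_3) S : cross_nz A ->
  sing A S <-> exists i j, i != j /\ S = lines_through A (crossv (A i) (A j)).
Proof.
move=> hA; split.
  case=> p [hp [-> /card_gt1P [i [j [hi hj hij]]]]].
  exists i, j; split => //.
  move: hi hj; rewrite !inE !on_lineE => /eqP hi /eqP hj.
  have [lam hlam hl] := point_cross hi hj hp (hA _ _ hij).
  by apply/setP => l; rewrite !inE !on_lineE hl mulf_eq0 (negbTE hlam).
case=> i [j [hij ->]]; exists (crossv (A i) (A j)); split; first exact: hA.
split => //; apply/card_gt1P; exists i, j; split => //; rewrite inE on_lineE.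
  by rewrite dot_cross_l.
by rewrite dot_cross_r.
Qed.
End Gen.

Section Sym.
Variable R : realType.
Local Notation C := R[i].
Variable phi : C.
Hypothesis hphi : phi ^+ 2 = 1 - phi.
Hypothesis hirr : forall a b : int, a%:~R + b%:~R * phi = 0 -> a = 0 /\ b = 0.

Definition ev (x : zp) : C := x.1%:~R + x.2%:~R * phi.
Lemma evD x y : ev (sadd x y) = ev x + ev y. Proof. by rewrite /ev /=; ring. Qed.
Lemma evB x y : ev (ssub x y) = ev x - ev y. Proof. by rewrite /ev /=; ring. Qed.
Lemma evM x y : ev (smul x y) = ev x * ev y.
Proof.
rewrite /ev /=; apply/eqP; rewrite -subr_eq0; apply/eqP.
have -> : (x.1 * y.1 + x.2 * y.2)%:~R + (x.1 * y.2 + x.2 * y.1 - x.2 * y.2)%:~R * phi -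
  (x.1%:~R + x.2%:~R * phi) * (y.1%:~R + y.2%:~R * phi) =
  (x.2 * y.2)%:~R * (1 - phi - phi ^+ 2) :> C by ring.
by rewrite hphi subrr mulr0.
Qed.
Lemma ev_eq0 x : (ev x == 0) = (x == z0).
Proof.
apply/eqP/eqP => [h|->]; last by rewrite /ev /= mul0r addr0.
by case: (hirr h); case: x h => a b /= _ -> ->.
Qed.
Definition evv (u : sv) : 'rV[C]_3 := line_of (ev u.1.1) (ev u.1.2) (ev u.2).
Lemma dot_ev u w : dot (evv u) (evv w) = ev (sdot u w).
Proof. by rewrite /dot /evv !c0E !c1E !c2E /sdot !evD !evM. Qed.
Lemma cross_ev u v : crossv (evv u) (evv v) = evv (scross u v).
Proof. by rewrite /crossv /evv !c0E !c1E !c2E /scross /= !evB !evM. Qed.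
Lemma on_line_ev u w : on_line (evv u) (evv w) = (sdot u w == z0).
Proof. by rewrite on_lineE dot_ev ev_eq0. Qed.
Lemma evv_eq0 u : (evv u == 0) = ~~ svnz u.
Proof. by rewrite line_of0 /evv c0E c1E c2E !ev_eq0 /svnz !negb_or !negbK. Qed.

Definition arrs (s : seq sv) : 'I_13 -> 'rV[C]_3 := fun i => evv (sl s i).

Lemma chk_arr_ok s : chk_arr s -> is_arr (arrs s) /\ cross_nz (arrs s).
Proof.
move=> /allP h.
have H : forall i j : 'I_13, svnz (sl s i) && ((i == j :> nat) || svnz (scross (sl s i) (sl s j))).
  move=> i j; have hi : (i : nat) \in I13 by rewrite mem_iota ltn_ord.
  have hj : (j : nat) \in I13 by rewrite mem_iota ltn_ord.
  by have /andP [h1 /allP h2] := h _ hi; rewrite h1 h2.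
have cnz : cross_nz (arrs s).
  move=> i j hij; rewrite /arrs cross_ev evv_eq0 negbK.
  by have /andP [_] := H i j; rewrite (negbTE (hij : (i : nat) != j)).
split => //; split.
  by move=> i; rewrite /arrs evv_eq0 negbK; case/andP: (H i i).
move=> i j hij /same_line_cross /eqP; exact/negP/cnz.
Qed.

Lemma lines_through_ev s (i j : 'I_13) :
  lines_through (arrs s) (crossv (arrs s i) (arrs s j)) = [set l : 'I_13 | onl s i j l].
Proof. by apply/setP => l; rewrite !inE /arrs cross_ev on_line_ev. Qed.

Lemma sing_arrs s S : chk_arr s ->
  sing (arrs s) S <-> exists i j : 'I_13, i != j /\ S = [set l : 'I_13 | onl s i j l].
Proof.
move=> /chk_arr_ok [_ hc]; rewrite (sing_char _ hc).
by split; case=> i [j [hij ->]]; exists i, j; rewrite lines_through_ev.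
Qed.

Lemma same_comb12 : same_comb (arrs symB1) (arrs symB2).
Proof.
move=> S; rewrite (sing_arrs _ chk_arr1) (sing_arrs _ chk_arr2).
have E : forall i j : 'I_13, [set l : 'I_13 | onl symB1 i j l] = [set l : 'I_13 | onl symB2 i j l].
  move=> i j; apply/setP => l; rewrite !inE.
  have /allP := chk_combT => /(_ i); rewrite mem_iota ltn_ord => /(_ isT) /allP /(_ j).
  rewrite mem_iota ltn_ord => /(_ isT) /allP /(_ l); rewrite mem_iota ltn_ord => /(_ isT).
  by move/eqP.
by split; case=> i [j [hij ->]]; exists i, j; rewrite E.
Qed.
End Sym.

Lemma nat_sq5 n : forall x y : nat, (y <= n)%N -> (x * x = 5 * (y * y))%N -> y = 0%N.
Proof.
elim: n => [x y|n IH x y hy h]; first by rewrite leqn0 => /eqP.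
have p5 : prime 5 by [].
have hxx : (5 %| x * x)%N by rewrite h dvdn_mulr.
have /dvdnP [x1 hx] : (5 %| x)%N by move: hxx; rewrite Euclid_dvdM // orbb.
have h2 : (5 * (x1 * x1) = y * y)%N by move: h; rewrite hx; lia.
have hyy : (5 %| y * y)%N by rewrite -h2 dvdn_mulr.
have /dvdnP [y1 hy1] : (5 %| y)%N by move: hyy; rewrite Euclid_dvdM // orbb.
have h3 : (x1 * x1 = 5 * (y1 * y1))%N by move: h2; rewrite hy1; lia.
case: (posnP y) => // y0.
have : y1 = 0%N by apply: (IH x1); lia.
lia.
Qed.

Lemma int_sq5 (x y : int) : x * x = 5 * (y * y) -> y = 0.
Proof.
move=> h; have := congr1 absz h; rewrite !abszM /= => h'.
by have /eqP := nat_sq5 (leqnn _) h'; rewrite absz_eq0 => /eqP.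
Qed.

Lemma rat_sq5 (x y : rat) : x * x = 5 * (y * y) -> y = 0.
Proof.
move=> h.
have : (numq x * denq y) * (numq x * denq y) = 5 * ((numq y * denq x) * (numq y * denq x)).
  apply: (@intr_inj rat); rewrite !rmorphM /= !numqE.
  transitivity ((x * x) * ((denq x)%:~R * (denq y)%:~R) ^+ 2 : rat); first by ring.
  by rewrite h; ring.
move/int_sq5/eqP; rewrite mulf_eq0 denq_eq0 orbF numq_eq0.
by move/eqP.
Qed.


Section Phi.
Variable R : realType.
Local Notation C := R[i].
Local Notation s5 := (sqrt5 R).

Lemma sqrt5_sq : s5 ^+ 2 = 5.
Proof.
rewrite /sqrt5 -rmorphXn /= sqr_sqrtr ?ler0n //.
by rewrite (rmorph_nat (real_complex R) 5).
Qed.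

Lemma irr_s (a b : rat) : ratr a + ratr b * s5 = 0 -> a = 0 /\ b = 0.
Proof.
move=> h.
have h2 : ratr (a * a - 5 * (b * b)) = 0 :> C.
  have e : ratr a = - (ratr b * s5) :> C by apply/eqP; rewrite -subr_eq0 opprK h.
  rewrite rmorphB !rmorphM /= e (rmorph_nat _ 5) /=.
  apply: subr0_eq.
  transitivity ((ratr b) ^+ 2 * (s5 ^+ 2 - 5) : C); first by ring.
  by rewrite sqrt5_sq subrr mulr0.
have hb : b = 0.
  apply: (@rat_sq5 a); apply/eqP; rewrite -subr_eq0; apply/eqP.
  by move: h2 => /eqP; rewrite fmorph_eq0 => /eqP.
split => //; move: h; rewrite hb rmorph0 mul0r addr0 => /eqP.
by rewrite fmorph_eq0 => /eqP.
Qed.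

Variable phi : C.
Hypothesis hp : phi = (-1 + s5) / 2 \/ phi = (-1 - s5) / 2.

Lemma two_nz : (2 : C) != 0.
Proof. by rewrite pnatr_eq0. Qed.

Lemma phi_sq : phi ^+ 2 = 1 - phi.
Proof.
have h2 := two_nz.
case: hp => ->; apply: subr0_eq.
- transitivity ((s5 ^+ 2 - 5) / 4 : C); first by field.
  by rewrite sqrt5_sq subrr mul0r.
- transitivity ((s5 ^+ 2 - 5) / 4 : C); first by field.
  by rewrite sqrt5_sq subrr mul0r.
Qed.

Lemma phi_irr (a b : int) : a%:~R + b%:~R * phi = 0 -> a = 0 /\ b = 0.
Proof.
move=> h; have h2 := two_nz.
have [e [he' hE]] : exists e : int, (e = 1 \/ e = -1) /\
   ratr ((2 * a - b)%:~R) + ratr ((e * b)%:~R) * s5 = 0 :> C.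
  case: hp => hp'; [exists 1 | exists (-1)]; (split; [by [left|right] |]);
  rewrite !ratr_int; (transitivity (2 * (a%:~R + b%:~R * phi) : C); [by rewrite hp'; field | by rewrite h mulr0]).
move: hE => /irr_s [/eqP h1 /eqP h3].
move: h1 h3; rewrite !intr_eq0 => /eqP h1 /eqP h3.
by case: he' => he'; subst e; split; lia.
Qed.


Lemma B1E : B1 phi = arrs phi symB1.
Proof.
apply: functional_extensionality => i; rewrite /B1.
have -> : common_lines phi ++ B1_lines phi = map (evv phi) symB1.
  rewrite /=; do 13!(apply: (congr2 cons); [apply: line_of_congr; rewrite /ev /=; ring|]); done.
by rewrite (nth_map sdef) // size_map /=.
Qed.

Lemma B2E : B2 phi = arrs phi symB2.
Proof.
apply: functional_extensionality => i; rewrite /B2.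
have -> : common_lines phi ++ B2_lines phi = map (evv phi) symB2.
  rewrite /=; do 13!(apply: (congr2 cons); [apply: line_of_congr; rewrite /ev /=; ring|]); done.
by rewrite (nth_map sdef) // size_map /=.
Qed.
End Phi.

Section Trans.
Variable R : realType.
Local Notation C := R[i].
Implicit Types u v w p l : 'rV[C]_3.
Implicit Types g h : 'M[C]_3.

Lemma c0M u g : c0 (u *m g) = c0 u * g i0 i0 + c1 u * g i1 i0 + c2 u * g i2 i0.
Proof. by rewrite /c0 mxE sum3. Qed.
Lemma c1M u g : c1 (u *m g) = c0 u * g i0 i1 + c1 u * g i1 i1 + c2 u * g i2 i1.
Proof. by rewrite /c1 mxE sum3. Qed.
Lemma c2M u g : c2 (u *m g) = c0 u * g i0 i2 + c1 u * g i1 i2 + c2 u * g i2 i2.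
Proof. by rewrite /c2 mxE sum3. Qed.

Definition Dt g := br (row i0 g) (row i1 g) (row i2 g).

Lemma br_mul u v w g : br (u *m g) (v *m g) (w *m g) = br u v w * Dt g.
Proof.
rewrite /Dt /br /dot /crossv !c0E !c1E !c2E !c0M !c1M !c2M.
rewrite /c0 /c1 /c2 !mxE; ring.
Qed.

Lemma br_lineE (a b c d e f x y z : C) :
  br (line_of a b c) (line_of d e f) (line_of x y z) =
  x * (b * f - c * e) + y * (c * d - a * f) + z * (a * e - b * d).
Proof. by rewrite /br /dot /crossv !c0E !c1E !c2E. Qed.

Lemma br_scale a b c u v w : br (a *: u) (b *: v) (c *: w) = a * b * c * br u v w.
Proof. by rewrite /br /dot /crossv !c0Z !c1Z !c2Z !c0E !c1E !c2E; ring. Qed.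

Lemma Dt1 : Dt 1%:M = 1.
Proof. by rewrite /Dt /br /dot /crossv !c0E !c1E !c2E /c0 /c1 /c2 !mxE /=; ring. Qed.

Lemma DtM g h : Dt (g *m h) = Dt g * Dt h.
Proof. by rewrite /Dt !row_mul br_mul. Qed.

Lemma Dt_unit g : g \in unitmx -> Dt g != 0.
Proof.
move=> hg; apply/eqP => h0.
have := DtM g (invmx g); rewrite mulmxV // Dt1 h0 mul0r => /eqP.
by rewrite oner_eq0.
Qed.

Lemma br_point u v w p : dot u p = 0 -> dot v p = 0 -> dot w p = 0 -> p != 0 -> br u v w = 0.
Proof.
move=> hu hv hw hp.
have e0 : br u v w * c0 p = (c1 v * c2 w - c2 v * c1 w) * dot u p - (c1 u * c2 w - c2 u * c1 w) * dot v p
   + (c1 u * c2 v - c2 u * c1 v) * dot w p by rewrite /br /dot /crossv !c0E !c1E !c2E; ring.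
have e1 : br u v w * c1 p = (c2 v * c0 w - c0 v * c2 w) * dot u p - (c2 u * c0 w - c0 u * c2 w) * dot v p
   + (c2 u * c0 v - c0 u * c2 v) * dot w p by rewrite /br /dot /crossv !c0E !c1E !c2E; ring.
have e2 : br u v w * c2 p = (c0 v * c1 w - c1 v * c0 w) * dot u p - (c0 u * c1 w - c1 u * c0 w) * dot v p
   + (c0 u * c1 v - c1 u * c0 v) * dot w p by rewrite /br /dot /crossv !c0E !c1E !c2E; ring.
rewrite hu hv hw !mulr0 !subr0 !addr0 in e0 e1 e2.
case: (nz_coord hp) => hc.
- by apply: (mulIf hc); rewrite mul0r.
- by apply: (mulIf hc); rewrite mul0r.
- by apply: (mulIf hc); rewrite mul0r.
Qed.

Lemma on_line_mul l g p : g \in unitmx ->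
  on_line (l *m g) (p *m (invmx g)^T) = on_line l p.
Proof.
move=> hg; rewrite /on_line trmx_mul trmxK mulmxA -(mulmxA l) mulmxV // mulmx1 //.
Qed.

Lemma on_line_scale k l p : k != 0 -> on_line (k *: l) p = on_line l p.
Proof. by move=> hk; rewrite /on_line -scalemxAl mxE mulf_eq0 (negbTE hk). Qed.

Lemma proj_equiv_sym n (A B : 'I_n -> 'rV[C]_3) : proj_equiv A B -> proj_equiv B A.
Proof.
case=> g [hg hAB]; exists (invmx g); split; first by rewrite unitmx_inv.
move=> i; case: (hAB i) => k [hk ->]; exists k^-1; split; first by rewrite invr_eq0.
by rewrite -scalemxAl -mulmxA mulmxV // mulmx1 scalerA mulVf // scale1r.
Qed.

Lemma sing_transfer n (A B : 'I_n -> 'rV[C]_3) S : proj_equiv A B -> sing A S -> sing B S.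
Proof.
case=> g [hg hAB] [p [hp [-> hS]]].
exists (p *m (invmx g)^T); split.
  apply: contra hp => /eqP h0.
  have -> : p = p *m (invmx g)^T *m g^T by rewrite -mulmxA -trmx_mul mulmxV // trmx1 mulmx1.
  by rewrite h0 mul0mx.
split => //; apply/setP => i; rewrite !inE.
case: (hAB i) => k [hk ->]; by rewrite on_line_scale // on_line_mul.
Qed.

Definition Xr n (Aref A : 'I_n -> 'rV[C]_3) := realization Aref A.

Lemma X_closed n (Aref A B : 'I_n -> 'rV[C]_3) : Xr Aref A -> proj_equiv A B -> Xr Aref B.
Proof.
move=> [[hnz hd] hc] hAB; have hBA := proj_equiv_sym hAB.
case: (hAB) => g [hg hAB'].
split; last by move=> S; rewrite hc; split; [exact: sing_transfer | exact: sing_transfer].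
split.
  move=> i; case: (hAB' i) => k [hk ->]; rewrite scaler_eq0 (negbTE hk) /=.
  apply: contra (hnz i) => /eqP h0.
  by rewrite -[A i]mulmx1 -(mulmxV hg) mulmxA h0 mul0mx.
move=> i j hij [c [hc0 hBij]]; apply: (hd i j hij).
case: (hAB' i) => ki [hki hBi]; case: (hAB' j) => kj [hkj hBj].
exists (kj^-1 * c * ki); split; first by rewrite !mulf_neq0 ?invr_eq0.
have h : kj *: (A j *m g) = (c * ki) *: (A i *m g) by rewrite -hBj hBij hBi scalerA.
have h1 : A j *m g = (kj^-1 * c * ki) *: (A i *m g).
  by rewrite -mulrA -scalerA -h scalerA mulVf // scale1r.
by rewrite -(mulmxK hg (A j)) h1 -scalemxAl mulmxK.
Qed.
End Trans.

Definition o (n : nat) : 'I_13 := inord n.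
Lemma o_val n : (n < 13)%N -> (o n : nat) = n.
Proof. by move=> h; rewrite /o inordK. Qed.
Lemma o_eq m n : (m < 13)%N -> (n < 13)%N -> (o m == o n) = (m == n).
Proof.
move=> hm hn; apply/eqP/eqP => [h|->//].
by rewrite -(o_val hm) -(o_val hn) h.
Qed.

Definition chk_self (s : seq sv) : bool :=
  all (fun i => all (fun j => onl s i j i && onl s i j j) I13) I13.
Lemma chk_self1 : chk_self symB1. Proof. by vm_compute. Qed.
Definition chk_013 (s : seq sv) : bool :=
  all (fun i => all (fun j => (i == j) || ~~ [&& onl s i j 0, onl s i j 1 & onl s i j 3]) I13) I13.
Lemma chk_0131 : chk_013 symB1. Proof. by vm_compute. Qed.

Lemma inI13 (i : 'I_13) : (i : nat) \in I13.
Proof. by rewrite mem_iota ltn_ord. Qed.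

Section Real.
Variable R : realType.
Local Notation C := R[i].
Variable phi : C.
Hypothesis hphi : phi ^+ 2 = 1 - phi.
Hypothesis hirr : forall a b : int, a%:~R + b%:~R * phi = 0 -> a = 0 /\ b = 0.
Local Notation A1 := (arrs phi symB1).
Local Notation X := (Xr A1).

Lemma concB (A : 'I_13 -> 'rV[C]_3) : same_comb A1 A ->
  forall i j l : 'I_13, i != j -> onl symB1 i j l -> br (A i) (A j) (A l) = 0.
Proof.
move=> hc i j l hij hl.
have hs : sing A1 [set m : 'I_13 | onl symB1 i j m].
  by apply/(sing_arrs hphi hirr _ chk_arr1); exists i, j.
case: (proj1 (hc _) hs) => p [hp [hS _]].
have mem : forall m : 'I_13, onl symB1 i j m -> dot (A m) p = 0.
  move=> m hm; have : m \in [set m : 'I_13 | onl symB1 i j m] by rewrite inE.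
  by rewrite hS inE on_lineE => /eqP.
have /allP /(_ _ (inI13 i)) /allP /(_ _ (inI13 j)) /andP [hi hj] := chk_self1.
apply: (br_point (mem _ hi) (mem _ hj) (mem _ hl) hp).
Qed.

Lemma noconc013 (A : 'I_13 -> 'rV[C]_3) p : same_comb A1 A ->
  dot (A (o 0)) p = 0 -> dot (A (o 1)) p = 0 -> dot (A (o 3)) p = 0 -> p != 0 -> False.
Proof.
move=> hc h0 h1 h3 hp.
have hsA : sing A (lines_through A p).
  exists p; split => //; split => //; apply/card_gt1P; exists (o 0), (o 1).
  by rewrite !inE !on_lineE h0 h1 o_eq.
have := proj2 (hc _) hsA; rewrite (sing_arrs hphi hirr _ chk_arr1).
case=> i [j [hij hE]].
have := chk_0131 => /allP /(_ _ (inI13 i)) /allP /(_ _ (inI13 j)).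
rewrite (negbTE (hij : (i : nat) != j)) /=.
have mem : forall n, (n < 13)%N -> dot (A (o n)) p = 0 -> onl symB1 i j n.
  move=> n hn hd; have : o n \in lines_through A p by rewrite inE on_lineE hd.
  by rewrite hE inE o_val.
by rewrite (mem 0%N) // (mem 1%N) // (mem 3%N).
Qed.

Lemma proj_equiv_trans (A B D : 'I_13 -> 'rV[C]_3) :
  proj_equiv A B -> proj_equiv B D -> proj_equiv A D.
Proof.
case=> g [hg hAB] [h [hh hBD]]; exists (g *m h); split; first by rewrite unitmx_mul hg hh.
move=> i; case: (hAB i) => k [hk hB]; case: (hBD i) => k' [hk' hD].
exists (k' * k); split; first by rewrite mulf_neq0.
by rewrite hD hB -scalemxAl scalerA mulmxA.
Qed.

Lemma e_row (r : 'I_3) (a b c : C) (M : 'M[C]_3) :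
  (forall k, M r k = nth 0 [:: a; b; c] k) -> row r M = line_of a b c.
Proof. by move=> h; apply/rowP => k; rewrite !mxE h. Qed.

Lemma line_of00 : line_of 0 0 0 = 0 :> 'rV[C]_3.
Proof. by apply/rowP => k; rewrite !mxE; case: k => [[|[|[|k]]] hk]. Qed.

Lemma mul_diag3 (u : 'rV[C]_3) (x y z : C) :
  u *m diag_mx (line_of x y z) = line_of (c0 u * x) (c1 u * y) (c2 u * z).
Proof.
rewrite mul_mx_diag; apply/rowP => k; rewrite !mxE /c0 /c1 /c2.
by case: k => [[|[|[|k]]] hk] //=; congr (u _ _ * _); apply: val_inj.
Qed.

Lemma concN A : same_comb A1 A -> forall i j l, (i < 13)%N -> (j < 13)%N -> (l < 13)%N ->
  i != j -> onl symB1 i j l -> br (A (o i)) (A (o j)) (A (o l)) = 0.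
Proof.
move=> hc i j l hi hj hl hij hon; apply: (concB hc).
  by rewrite o_eq.
by rewrite !o_val.
Qed.

Lemma notprop (A : 'I_13 -> 'rV[C]_3) i j k : is_arr A -> i != j -> A j = k *: A i -> False.
Proof.
move=> [hnz hd] hij hA; case: (k =P 0) => [k0|/eqP hk].
  by move: (hnz j); rewrite hA k0 scale0r eqxx.
by apply: (hd i j hij); exists k.
Qed.

Lemma prod3 (f : 'I_3 -> C) : \prod_k f k = f i0 * f i1 * f i2.
Proof. rewrite !big_ord_recr big_ord0 /= mul1r; congr (f _ * f _ * f _); exact: val_inj. Qed.

Lemma normalize A : X A -> exists Bn, [/\ X Bn, proj_equiv A Bn &
 [/\ Bn (o 0) = line_of 0 0 1, Bn (o 1) = line_of 1 0 0,
  Bn (o 2) = line_of 1 0 (-1), Bn (o 3) = line_of 0 1 0 & Bn (o 4) = line_of 0 1 (-1)]].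
Proof.
move=> hX; have hc := hX.2.
pose M : 'M[C]_3 := \matrix_(r < 3, c < 3) (nth 0 [:: A (o 1); A (o 3); A (o 0)] r) 0 c.
have hM : M \in unitmx.
  rewrite unitmxE unitfE -det_tr; apply/negP => /det0P [v hv hvM].
  have hd : forall r : 'I_3, dot (nth 0 [:: A (o 1); A (o 3); A (o 0)] r) v = 0.
    move=> r; have := congr1 (fun m : 'rV[C]_3 => m 0 r) hvM; rewrite !mxE sum3 !mxE /dot.
    by rewrite /c0 /c1 /c2 => <-; ring.
  exact: (noconc013 hc (hd i2) (hd i0) (hd i1) hv).
pose g1 := invmx M.
have rowM : forall r : 'I_3, nth 0 [:: A (o 1); A (o 3); A (o 0)] r *m g1 = row r 1%:M.
  move=> r; rewrite -[X in X *m _](_ : row r M = _); last by apply/rowP => k; rewrite !mxE.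
  by rewrite -row_mul mulmxV.
pose A1' := fun i => A i *m g1.
have pe1 : proj_equiv A A1'.
  exists g1; split; first by rewrite unitmx_inv.
  by move=> i; exists 1; rewrite scale1r oner_eq0.
have hX1 := X_closed hX pe1.
have h10 : A1' (o 1) = line_of 1 0 0 by rewrite /A1' (rowM i0); apply: e_row => k; rewrite !mxE; case: k => [[|[|[|k]]] hk].
have h13 : A1' (o 3) = line_of 0 1 0 by rewrite /A1' (rowM i1); apply: e_row => k; rewrite !mxE; case: k => [[|[|[|k]]] hk].
have h00 : A1' (o 0) = line_of 0 0 1 by rewrite /A1' (rowM i2); apply: e_row => k; rewrite !mxE; case: k => [[|[|[|k]]] hk].
have [hnz1 _] := hX1.1.
have hc1 := hX1.2.
have e012 := concN (i:=0%N) (j:=1%N) (l:=2%N) hc1 isT isT isT isT isT.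
rewrite h00 h10 (rV3E (A1' (o 2))) br_lineE in e012.
have e034 := concN (i:=0%N) (j:=3%N) (l:=4%N) hc1 isT isT isT isT isT.
rewrite h00 h13 (rV3E (A1' (o 4))) br_lineE in e034.
move: e012 e034 (rV3E (A1' (o 2))) (rV3E (A1' (o 4))).
move: (c0 (A1' (o 2))) (c1 (A1' (o 2))) (c2 (A1' (o 2))) (c0 (A1' (o 4))) (c1 (A1' (o 4))) (c2 (A1' (o 4))).
move=> a2 b2 x2 a4 b4 x4.
move=> e012 e034 h2 h4.
have hb2 : b2 = 0 by rewrite -e012; ring.
have ha4 : a4 = 0 by rewrite -[0]oppr0 -e034; ring.
subst b2 a4.
have na2 : a2 != 0.
  apply/eqP => z; apply: (@notprop A1' (o 0) (o 2) x2 hX1.1); first by rewrite o_eq.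
  by rewrite h2 h00 z line_ofZ; apply: line_of_congr; ring.
have nc2 : x2 != 0.
  apply/eqP => z; apply: (@notprop A1' (o 1) (o 2) a2 hX1.1); first by rewrite o_eq.
  by rewrite h2 h10 z line_ofZ; apply: line_of_congr; ring.
have nb4 : b4 != 0.
  apply/eqP => z; apply: (@notprop A1' (o 0) (o 4) x4 hX1.1); first by rewrite o_eq.
  by rewrite h4 h00 z line_ofZ; apply: line_of_congr; ring.
have nc4 : x4 != 0.
  apply/eqP => z; apply: (@notprop A1' (o 3) (o 4) b4 hX1.1); first by rewrite o_eq.
  by rewrite h4 h13 z line_ofZ; apply: line_of_congr; ring.
pose al := - x2 / a2; pose be := - x4 / b4.
have nal : al != 0 by rewrite /al mulf_neq0 ?oppr_eq0 ?invr_eq0.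
have nbe : be != 0 by rewrite /be mulf_neq0 ?oppr_eq0 ?invr_eq0.
pose g2 := diag_mx (line_of al be 1).
have hg2 : g2 \in unitmx.
  rewrite unitmxE det_diag prod3 unitfE /=.
  by rewrite -/(c0 _) -/(c1 _) -/(c2 _) c0E c1E c2E mulr1 mulf_neq0.
pose Bn := fun i => if i == o 1 then line_of 1 0 0 else if i == o 2 then line_of 1 0 (-1)
   else if i == o 3 then line_of 0 1 0 else if i == o 4 then line_of 0 1 (-1) else A1' i *m g2.
have pe2 : proj_equiv A1' Bn.
  exists g2; split => // i; rewrite /Bn.
  case: ifP => [/eqP ->|_].
    exists al^-1; split; first by rewrite invr_eq0.
    rewrite h10 mul_diag3 c0E c1E c2E line_ofZ; apply: line_of_congr; by field; rewrite ?oppr_eq0 ?na2 ?nc2 ?nb4 ?nc4.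
  case: ifP => [/eqP ->|_].
    exists (- x2)^-1; split; first by rewrite invr_eq0 oppr_eq0.
    rewrite h2 mul_diag3 c0E c1E c2E line_ofZ /al; apply: line_of_congr; by field; rewrite ?oppr_eq0 ?na2 ?nc2 ?nb4 ?nc4.
  case: ifP => [/eqP ->|_].
    exists be^-1; split; first by rewrite invr_eq0.
    rewrite h13 mul_diag3 c0E c1E c2E line_ofZ; apply: line_of_congr; by field; rewrite ?oppr_eq0 ?na2 ?nc2 ?nb4 ?nc4.
  case: ifP => [/eqP ->|_].
    exists (- x4)^-1; split; first by rewrite invr_eq0 oppr_eq0.
    rewrite h4 mul_diag3 c0E c1E c2E line_ofZ /be; apply: line_of_congr; by field; rewrite ?oppr_eq0 ?na2 ?nc2 ?nb4 ?nc4.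
  by exists 1; rewrite scale1r oner_eq0.
exists Bn; split.
- exact: X_closed hX1 pe2.
- exact: proj_equiv_trans pe1 pe2.
split; rewrite /Bn ?o_eq //=.
by rewrite h00 mul_diag3 c0E c1E c2E; apply: line_of_congr; ring.
Qed.

Ltac zv := apply/eqP; rewrite line_of0 !c0E !c1E !c2E; rewrite ?oppr0 ?mul0r ?mulr0 ?subrr ?subr0 ?sub0r ?add0r ?addr0 ?oppr0 ?eqxx.

Lemma derive B : X B -> B (o 0) = line_of 0 0 1 -> B (o 1) = line_of 1 0 0 ->
  B (o 2) = line_of 1 0 (-1) -> B (o 3) = line_of 0 1 0 -> B (o 4) = line_of 0 1 (-1) ->
  exists a b t, [/\ c0 (B (o 10)) = a, c1 (B (o 10)) = b, a != 0,
     t ^+ 2 + t - 1 = 0 & b ^+ 2 + 2 * a * b + (3 * t - 1) * a ^+ 2 = 0].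
Proof.
move=> hX h0 h1 h2 h3 h4.
have [hnz _] := hX.1.
have hc := hX.2.
have E : forall i j l, (i < 13)%N -> (j < 13)%N -> (l < 13)%N -> i != j -> onl symB1 i j l ->
   br (B (o i)) (B (o j)) (B (o l)) = 0 by move=> i j l; apply: concN.
have np : forall i j k, (i < 13)%N -> (j < 13)%N -> i != j -> B (o j) = k *: B (o i) -> False.
  by move=> i j k hi hj hij; apply: (notprop hX.1); rewrite o_eq.
have nz : forall j, (j < 13)%N -> B (o j) <> 0 by move=> j _ h; move: (hnz (o j)); rewrite h eqxx.
have cv : forall j, exists a b c, B (o j) = line_of a b c.
  by move=> j; exists (c0 (B (o j))), (c1 (B (o j))), (c2 (B (o j))); exact: rV3E.
have [a5 [b5 [c5 h5]]] := cv 5%N.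
have [a6 [b6 [c6 h6]]] := cv 6%N.
have [a7 [b7 [c7 h7]]] := cv 7%N.
have [a8 [b8 [c8 h8]]] := cv 8%N.
have [a9 [b9 [c9 h9]]] := cv 9%N.
have [a10 [b10 [c10 h10]]] := cv 10%N.
have [a11 [b11 [c11 h11]]] := cv 11%N.
have [a12 [b12 [c12 h12]]] := cv 12%N.
rewrite h10 c0E c1E.
have := E 1%N 3%N 5%N isT isT isT isT isT; rewrite h1 h3 h5 br_lineE => {}e.
have ? : c5 = 0 by rewrite -e; ring. subst c5.
have := E 1%N 3%N 8%N isT isT isT isT isT; rewrite h1 h3 h8 br_lineE => {}e.
have ? : c8 = 0 by rewrite -e; ring. subst c8.
have := E 2%N 4%N 5%N isT isT isT isT isT; rewrite h2 h4 h5 br_lineE => {}e.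
have ? : b5 = - a5 by apply: subr0_eq; rewrite -e; ring. subst b5.
have na5 : a5 != 0 by apply/eqP => z; apply: (nz 5%N isT); rewrite h5 z; zv.
have := E 0%N 1%N 9%N isT isT isT isT isT; rewrite h0 h1 h9 br_lineE => {}e.
have ? : b9 = 0 by rewrite -e; ring. subst b9.
have := E 2%N 3%N 6%N isT isT isT isT isT; rewrite h2 h3 h6 br_lineE => {}e.
have ? : c6 = - a6 by apply: subr0_eq; rewrite -e; ring. subst c6.
have na6 : a6 != 0.
  apply/eqP => z; apply: (np 3%N 6%N b6 isT isT isT).
  by rewrite h6 h3 z line_ofZ; apply: line_of_congr; ring.
have [t ht] : exists t, b6 = a6 * t by exists (b6 / a6); field.
subst b6.
have := E 0%N 5%N 7%N isT isT isT isT isT; rewrite h0 h5 h7 br_lineE => {}e.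
have {}e' : a5 * (a7 + b7) = 0 by rewrite -e; ring.
have ? : b7 = - a7.
  by apply: subr0_eq; apply: (mulfI na5); rewrite mulr0 -e'; ring.
subst b7.
have nc7 : c7 != 0.
  apply/eqP => z; apply: (np 5%N 7%N (a7 / a5) isT isT isT).
  rewrite h7 h5 z line_ofZ; apply: line_of_congr; by field.
have := E 1%N 6%N 7%N isT isT isT isT isT; rewrite h1 h6 h7 br_lineE => {}e.
have {}e' : a6 * (c7 * t - a7) = 0 by rewrite -e; ring.
have ? : a7 = c7 * t.
  by apply/esym/subr0_eq; apply: (mulfI na6); rewrite mulr0 -e'.
subst a7.
have := E 0%N 6%N 8%N isT isT isT isT isT; rewrite h0 h6 h8 br_lineE => {}e.
have {}e' : a6 * (b8 - t * a8) = 0 by rewrite -e; ring.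
have ? : b8 = t * a8.
  by apply: subr0_eq; apply: (mulfI na6); rewrite mulr0 -e'.
subst b8.
have na8 : a8 != 0 by apply/eqP => z; apply: (nz 8%N isT); rewrite h8 z; zv.
have := E 4%N 7%N 8%N isT isT isT isT isT; rewrite h4 h7 h8 br_lineE => {}e.
have {}e' : (a8 * c7) * (t ^+ 2 + t - 1) = 0 by rewrite -[0]oppr0 -e; ring.
have htq : t ^+ 2 + t - 1 = 0.
  by apply: (mulfI (mulf_neq0 na8 nc7)); rewrite mulr0 e'.
have := E 5%N 6%N 9%N isT isT isT isT isT; rewrite h5 h6 h9 br_lineE => {}e.
have {}e' : (a5 * a6) * (a9 + (t + 1) * c9) = 0 by rewrite -e; ring.
have ? : a9 = - ((t + 1) * c9).
  by apply: subr0_eq; apply: (mulfI (mulf_neq0 na5 na6)); rewrite mulr0 -e'; ring.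
subst a9.
have nc9 : c9 != 0 by apply/eqP => z; apply: (nz 9%N isT); rewrite h9 z; zv.
have := E 4%N 6%N 10%N isT isT isT isT isT; rewrite h4 h6 h10 br_lineE => {}e.
have {}e' : a6 * ((t - 1) * a10 - b10 - c10) = 0 by rewrite -e; ring.
have ? : c10 = (t - 1) * a10 - b10.
  by apply/esym/subr0_eq; apply: (mulfI na6); rewrite mulr0 -e'.
subst c10.
have := E 3%N 9%N 11%N isT isT isT isT isT; rewrite h3 h9 h11 br_lineE => {}e.
have {}e' : c9 * (a11 + (t + 1) * c11) = 0 by rewrite -e; ring.
have ? : a11 = - ((t + 1) * c11).
  by apply: subr0_eq; apply: (mulfI nc9); rewrite mulr0 -e'; ring.
subst a11.
have nc11 : c11 != 0.
  apply/eqP => z; apply: (np 3%N 11%N b11 isT isT isT).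
  by rewrite h11 h3 z line_ofZ; apply: line_of_congr; ring.
have := E 3%N 7%N 12%N isT isT isT isT isT; rewrite h3 h7 h12 br_lineE => {}e.
have {}e' : c7 * (a12 - t * c12) = 0 by rewrite -e; ring.
have ? : a12 = t * c12.
  by apply: subr0_eq; apply: (mulfI nc7); rewrite mulr0 -e'.
subst a12.
have nc12 : c12 != 0.
  apply/eqP => z; apply: (np 3%N 12%N b12 isT isT isT).
  by rewrite h12 h3 z line_ofZ; apply: line_of_congr; ring.
have := E 1%N 10%N 11%N isT isT isT isT isT; rewrite h1 h10 h11 br_lineE => e14.
have := E 0%N 10%N 12%N isT isT isT isT isT; rewrite h0 h10 h12 br_lineE => e15.
have := E 4%N 11%N 12%N isT isT isT isT isT; rewrite h4 h11 h12 br_lineE => e16.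
have E1 : b10 * c11 - ((t - 1) * a10 - b10) * b11 = 0 by rewrite -e14; ring.
have E2 : a10 * b12 - b10 * t * c12 = 0 by rewrite -e15; ring.
have E3 : (1 + 2 * t) * c11 * c12 + (1 + t) * c11 * b12 + t * b11 * c12 = 0 by rewrite -e16; ring.
have key : c11 * c12 * (b10 ^+ 2 + 2 * a10 * b10 + (3 * t - 1) * a10 ^+ 2) =
  c11 * c12 * (t ^+ 2 + t - 1) * (2 * a10 ^+ 2 + (t - 1) * a10 * b10 - b10 ^+ 2)
  - (a10 * ((t - 1) * a10 - b10) * ((1 + 2 * t) * c11 * c12 + (1 + t) * c11 * b12 + t * b11 * c12)
     - (1 + t) * c11 * ((t - 1) * a10 - b10) * (a10 * b12 - b10 * t * c12)
     + t * c12 * a10 * (b10 * c11 - ((t - 1) * a10 - b10) * b11)) by ring.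
rewrite htq E1 E2 E3 in key.
have hG : b10 ^+ 2 + 2 * a10 * b10 + (3 * t - 1) * a10 ^+ 2 = 0.
  by apply: (mulfI (mulf_neq0 nc11 nc12)); rewrite mulr0 key; ring.
exists a10, b10, t; split => //.
apply/eqP => z; subst a10.
have nt : t != 0 by apply/eqP => z; move: htq; rewrite z expr0n /= add0r sub0r => /eqP; rewrite oppr_eq0 oner_eq0.
have : b10 * (t * c12) = 0 by rewrite -[0]oppr0 -E2; ring.
move/eqP; rewrite !mulf_eq0 (negbTE nt) (negbTE nc12) !orbF => /eqP z.
by apply: (nz 10%N isT); rewrite h10 z; zv.
Qed.
End Real.

Definition sbr (u v w : sv) : zp := sdot w (scross u v).
Definition sN (s : seq sv) : zp :=
  ssub z0 (smul (smul (sbr (sl s 10) (sl s 0) (sl s 1)) (sbr (sl s 3) (sl s 0) (sl s 2)))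
                (sbr (sl s 4) (sl s 1) (sl s 3))).
Definition sD (s : seq sv) : zp :=
  smul (smul (sbr (sl s 10) (sl s 3) (sl s 0)) (sbr (sl s 1) (sl s 0) (sl s 4)))
       (sbr (sl s 2) (sl s 1) (sl s 3)).
Definition sL (al be : zp) (s : seq sv) : zp := sadd (smul al (sN s)) (smul be (sD s)).
Definition sP s := sL (2, 1) (1, 1) s.
Definition sQ s := smul (smul (sL (2, 1) (3, 1) s) (sL (1, -1) (0, -1) s)) (sL (1, -1) (2, -1) s).
Lemma sP1 : sP symB1 == z0. Proof. by vm_compute. Qed.
Lemma sQ2 : sQ symB2 == z0. Proof. by vm_compute. Qed.

Section Inv.
Variable R : realType.
Local Notation C := R[i].
Variable phi : C.
Hypothesis hphi : phi ^+ 2 = 1 - phi.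
Hypothesis hirr : forall a b : int, a%:~R + b%:~R * phi = 0 -> a = 0 /\ b = 0.
Local Notation A1 := (arrs phi symB1).
Local Notation X := (Xr A1).
Implicit Types A B : 'I_13 -> 'rV[C]_3.

Definition Nf A := - (br (A (o 10)) (A (o 0)) (A (o 1)) * br (A (o 3)) (A (o 0)) (A (o 2))
   * br (A (o 4)) (A (o 1)) (A (o 3))).
Definition Df A := br (A (o 10)) (A (o 3)) (A (o 0)) * br (A (o 1)) (A (o 0)) (A (o 4))
   * br (A (o 2)) (A (o 1)) (A (o 3)).
Definition Lf (al be : C) A := al * Nf A + be * Df A.
Definition Pf A := Lf (phi + 2) (phi + 1) A.
Definition Qf A := Lf (phi + 2) (phi + 3) A * Lf (1 - phi) (- phi) A * Lf (1 - phi) (2 - phi) A.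

Lemma ND_equiv A B : proj_equiv A B -> exists2 c : C, c != 0 & Nf B = c * Nf A /\ Df B = c * Df A.
Proof.
case=> g [hg hAB].
case: (hAB (o 0)) => k0 [hk0 e0]; case: (hAB (o 1)) => k1 [hk1 e1].
case: (hAB (o 2)) => k2 [hk2 e2]; case: (hAB (o 3)) => k3 [hk3 e3].
case: (hAB (o 4)) => k4 [hk4 e4]; case: (hAB (o 10)) => k10 [hk10 e10].
have hD := Dt_unit hg.
exists (k10 * k0 * k1 * k3 * k0 * k2 * k4 * k1 * k3 * Dt g ^+ 3).
  by rewrite !mulf_neq0 // expf_neq0.
rewrite /Nf /Df e0 e1 e2 e3 e4 e10 !br_scale !br_mul; split; ring.
Qed.

Lemma PQ_equiv A B : proj_equiv A B -> (Pf A = 0 <-> Pf B = 0) /\ (Qf A = 0 <-> Qf B = 0).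
Proof.
case/ND_equiv => c hc [hN hD].
have hL : forall al be, Lf al be B = c * Lf al be A by move=> al be; rewrite /Lf hN hD; ring.
rewrite /Pf /Qf !hL.
have hc3 : c * c * c != 0 by rewrite !mulf_neq0.
split; split => h.
- by rewrite h mulr0.
- by move/eqP: h; rewrite mulf_eq0 (negbTE hc) => /eqP.
- by rewrite (_ : _ * _ = (c * c * c) * (Lf (phi + 2) (phi + 3) A * Lf (1 - phi) (- phi) A * Lf (1 - phi) (2 - phi) A)); [rewrite h mulr0 | ring].
- move: h; rewrite (_ : _ * _ = (c * c * c) * (Lf (phi + 2) (phi + 3) A * Lf (1 - phi) (- phi) A * Lf (1 - phi) (2 - phi) A)); last by ring.
  by move/eqP; rewrite mulf_eq0 (negbTE hc3) => /eqP.
Qed.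

Lemma dichotomy A : X A -> (Pf A = 0 \/ Qf A = 0) /\ ~ (Pf A = 0 /\ Qf A = 0).
Proof.
move=> hX; have [Bn [hXB pe [h0 h1 h2 h3 h4]]] := normalize hphi hirr hX.
have [[PP1 PP2] [QQ1 QQ2]] := PQ_equiv pe.
have [a [b [t [ha hb na ht hG]]]] := derive hphi hirr hXB h0 h1 h2 h3 h4.
have hN : Nf Bn = b.
  rewrite /Nf h0 h1 h2 h3 h4 (rV3E (Bn (o 10))) ha hb !br_lineE; ring.
have hDf : Df Bn = a.
  rewrite /Df h0 h1 h2 h3 h4 (rV3E (Bn (o 10))) ha hb !br_lineE; ring.
have hL : forall al be, Lf al be Bn = al * b + be * a by move=> al be; rewrite /Lf hN hDf.
have hphi' : phi ^+ 2 + phi - 1 = 0 by rewrite hphi; ring.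
have ht2 : (t - phi) * (t + phi + 1) = 0.
  by rewrite (_ : _ * _ = (t ^+ 2 + t - 1) - (phi ^+ 2 + phi - 1)); [rewrite ht hphi' subrr | ring].
have hPB : Pf Bn = (phi + 2) * b + (phi + 1) * a by rewrite /Pf hL.
have hQB : Qf Bn = ((phi + 2) * b + (phi + 3) * a) * ((1 - phi) * b + - phi * a) *
    ((1 - phi) * b + (2 - phi) * a) by rewrite /Qf !hL.
split.
  move/eqP: ht2; rewrite mulf_eq0 => /orP [/eqP e|/eqP e].
  - have et : t = phi by apply: subr0_eq.
    have : ((phi + 2) * b + (phi + 1) * a) * ((phi + 2) * b + (phi + 3) * a) = 0.
      rewrite (_ : _ * _ = (3 * phi + 5) * (b ^+ 2 + 2 * a * b + (3 * t - 1) * a ^+ 2)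
         + (phi ^+ 2 + phi - 1) * (b ^+ 2 + 2 * a * b - 8 * a ^+ 2)); last by rewrite et; ring.
      by rewrite hG hphi' mulr0 mul0r addr0.
    move/eqP; rewrite mulf_eq0 => /orP [/eqP z|/eqP z].
      by left; apply/PP2; rewrite hPB.
    by right; apply/QQ2; rewrite hQB z !mul0r.
  - have et : t = - 1 - phi by apply/eqP; rewrite -subr_eq0 -e; apply/eqP; ring.
    right; apply/QQ2; rewrite hQB.
    have : ((1 - phi) * b + - phi * a) * ((1 - phi) * b + (2 - phi) * a) = 0.
      rewrite (_ : _ * _ = (2 - 3 * phi) * (b ^+ 2 + 2 * a * b + (3 * t - 1) * a ^+ 2)
         + (phi ^+ 2 + phi - 1) * (b ^+ 2 + 2 * a * b - 8 * a ^+ 2)); last by rewrite et; ring.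
      by rewrite hG hphi' mulr0 mul0r addr0.
    by move=> z; rewrite -mulrA z mulr0.
case=> /PP1 hP /QQ1 hQ; rewrite hPB in hP; rewrite hQB in hQ.
move/eqP: hQ; rewrite !mulf_eq0 => /orP [/orP [/eqP z|/eqP z]|/eqP z].
- have : 2 * a = 0 by rewrite -[0]subr0 -{1}z -hP; ring.
  by move/eqP; rewrite mulf_eq0 pnatr_eq0 (negbTE na).
- have : (1 + 2 * phi) * a = 0.
    by rewrite (_ : _ * _ = (1 - phi) * ((phi + 2) * b + (phi + 1) * a) - (phi + 2) * ((1 - phi) * b + - phi * a)); [rewrite hP z !mulr0 subrr | ring].
  move/eqP; rewrite mulf_eq0 (negbTE na) orbF => /eqP h12.
  have := hirr (a := 1) (b := 2); rewrite (_ : (1:int)%:~R + (2:int)%:~R * phi = 1 + 2 * phi); last by ring.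
  by move/(_ h12) => [].
- have : 3 * a = 0.
    by rewrite (_ : _ * _ = (phi + 2) * ((1 - phi) * b + (2 - phi) * a) - (1 - phi) * ((phi + 2) * b + (phi + 1) * a)); [rewrite hP z !mulr0 subrr | ring].
  by move/eqP; rewrite mulf_eq0 pnatr_eq0 (negbTE na).
Qed.
End Inv.

Local Open Scope complex_scope.
Local Open Scope ring_scope.

Section Cont.
Variable R : realType.
Local Notation C := R[i].
Local Notation Arr := ('I_13 -> 'rV[C]_3).

Definition nm (z : C) : R := complex.Re `|z|.
Lemma nmE z : `|z| = (nm z)%:C.
Proof. by rewrite /nm normc_def. Qed.
Lemma nm_ge0 z : 0 <= nm z.
Proof. by rewrite -lecR -nmE normr_ge0. Qed.
Lemma nmD x y : nm (x + y) <= nm x + nm y.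
Proof. by rewrite -lecR rmorphD /= -!nmE ler_normD. Qed.
Lemma nmM x y : nm (x * y) = nm x * nm y.
Proof. by apply: complexI; rewrite rmorphM /= -!nmE normrM. Qed.
Lemma nmN x : nm (- x) = nm x.
Proof. by rewrite /nm normrN. Qed.
Lemma nm_eq0 x : nm x = 0 -> x = 0.
Proof. by move=> h; apply: normr0_eq0; rewrite nmE h. Qed.

Definition cont (F : Arr -> C) := forall (A : Arr) (e : R), 0 < e ->
  exists2 d : R, 0 < d & forall B : Arr, (forall i k, nm (B i 0 k - A i 0 k) < d) -> nm (F B - F A) < e.

Lemma cont_ext (F G : Arr -> C) : cont F -> (forall A, G A = F A) -> cont G.
Proof.
move=> hF hFG A e he; have [d hd hB] := hF A e he; exists d => // B hBA.
by rewrite !hFG; apply: hB.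
Qed.

Lemma cont_const (c : C) : cont (fun _ => c).
Proof. by move=> A e he; exists 1 => // B _; rewrite subrr /nm normr0 /=. Qed.

Lemma cont_coord i k : cont (fun A => A i 0 k).
Proof. by move=> A e he; exists e. Qed.

Lemma cont_opp (F : Arr -> C) : cont F -> cont (fun A => - F A).
Proof.
move=> hF A e he; have [d hd hB] := hF A e he; exists d => // B hBA.
by rewrite -opprD nmN; apply: hB.
Qed.

Lemma cont_add (F G : Arr -> C) : cont F -> cont G -> cont (fun A => F A + G A).
Proof.
move=> hF hG A e he.
have he2 : 0 < e / 2 by lra.
have [d1 hd1 hB1] := hF A _ he2; have [d2 hd2 hB2] := hG A _ he2.
exists (Num.min d1 d2); first by rewrite lt_min hd1 hd2.
move=> B hBA.
have h1 : nm (F B - F A) < e / 2 by apply: hB1 => i k; have := hBA i k; rewrite lt_min => /andP [].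
have h2 : nm (G B - G A) < e / 2 by apply: hB2 => i k; have := hBA i k; rewrite lt_min => /andP [].
have := nmD (F B - F A) (G B - G A).
rewrite (_ : F B - F A + (G B - G A) = F B + G B - (F A + G A)); last by ring.
lra.
Qed.

Lemma cont_sub (F G : Arr -> C) : cont F -> cont G -> cont (fun A => F A - G A).
Proof. by move=> hF hG; apply: cont_add => //; apply: cont_opp. Qed.

Lemma cont_mul (F G : Arr -> C) : cont F -> cont G -> cont (fun A => F A * G A).
Proof.
move=> hF hG A e he.
set a := nm (F A); set b := nm (G A).
have ha : 0 <= a := nm_ge0 _. have hb : 0 <= b := nm_ge0 _.
pose eta := Num.min 1 (e / (2 * (1 + a + b))).
have hM : 0 < 2 * (1 + a + b) by lra.
have heta : 0 < eta by rewrite lt_min ltr01 divr_gt0.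
have heta1 : eta <= 1 by rewrite ge_min lexx.
have heta2 : eta * (2 * (1 + a + b)) <= e.
  have : eta <= e / (2 * (1 + a + b)) by rewrite ge_min lexx orbT.
  by rewrite -(ler_pM2r hM) mulfVK // gt_eqF.
have [d1 hd1 hB1] := hF A _ heta; have [d2 hd2 hB2] := hG A _ heta.
exists (Num.min d1 d2); first by rewrite lt_min hd1 hd2.
move=> B hBA.
have h1 : nm (F B - F A) < eta by apply: hB1 => i k; have := hBA i k; rewrite lt_min => /andP [].
have h2 : nm (G B - G A) < eta by apply: hB2 => i k; have := hBA i k; rewrite lt_min => /andP [].
set x := nm (F B - F A) in h1 *; set y := nm (G B - G A) in h2 *.
have hx : 0 <= x := nm_ge0 _. have hy : 0 <= y := nm_ge0 _.
have E : F B * G B - F A * G A = (F B - F A) * (G B - G A) + F A * (G B - G A) + G A * (F B - F A)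
  by ring.
have hn : nm (F B * G B - F A * G A) <= x * y + a * y + b * x.
  rewrite E -!nmM -/x -/y -/a -/b.
  apply: (le_trans (nmD _ _)); rewrite lerD2r.
  exact: nmD.
have hxy : x * y <= eta * y by rewrite ler_wpM2r // ltW.
have hy' : y * (1 + a + b) <= eta * (1 + a + b) by rewrite ler_wpM2r ?ltW //; lra.
have hx' : b * x <= b * eta by rewrite ler_wpM2l // ltW.
nra.
Qed.
End Cont.

Local Open Scope complex_scope.
Local Open Scope ring_scope.

Ltac ctac0 := lazymatch goal with
| |- cont (fun A => @?f A + @?g A) => apply: (cont_add (F := f) (G := g)); ctac0
| |- cont (fun A => - @?f A) => apply: (cont_opp (F := f)); ctac0
| |- cont (fun A => @?f A * @?g A) => apply: (cont_mul (F := f) (G := g)); ctac0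
| |- cont (fun A => @fun_of_matrix _ _ _ _ _ _) => apply: cont_coord
| |- _ => apply: cont_const
end.

Section Fin.
Variable R : realType.
Local Notation C := R[i].

Lemma cont_br (i j l : 'I_13) : cont (fun A : 'I_13 -> 'rV[C]_3 => br (A i) (A j) (A l)).
Proof.
apply: (@cont_ext _ (fun A => A l 0 i0 * (A i 0 i1 * A j 0 i2 - A i 0 i2 * A j 0 i1)
  + A l 0 i1 * (A i 0 i2 * A j 0 i0 - A i 0 i0 * A j 0 i2)
  + A l 0 i2 * (A i 0 i0 * A j 0 i1 - A i 0 i1 * A j 0 i0))).
  by ctac0.
by move=> A; rewrite /br /dot /crossv /c0 /c1 /c2 !mxE.
Qed.

Ltac ctac1 := lazymatch goal with
| |- cont (fun A => @?f A + @?g A) => apply: (cont_add (F := f) (G := g)); ctac1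
| |- cont (fun A => - @?f A) => apply: (cont_opp (F := f)); ctac1
| |- cont (fun A => @?f A * @?g A) => apply: (cont_mul (F := f) (G := g)); ctac1
| |- cont (fun A => br _ _ _) => apply: cont_br
| |- _ => apply: cont_const
end.

Lemma cont_Pf (phi : C) : cont (Pf phi).
Proof. rewrite /Pf /Lf /Nf /Df; ctac1. Qed.

Lemma cont_Qf (phi : C) : cont (Qf phi).
Proof.
rewrite /Qf /Lf /Nf /Df.
ctac1.
Qed.

Variable phi : C.
Hypothesis hphi : phi ^+ 2 = 1 - phi.
Hypothesis hirr : forall a b : int, a%:~R + b%:~R * phi = 0 -> a = 0 /\ b = 0.

Lemma br_ev u v w : br (evv phi u) (evv phi v) (evv phi w) = ev phi (sbr u v w).
Proof. by rewrite /br (cross_ev hphi) (dot_ev hphi). Qed.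

Lemma ev_z0 : ev phi z0 = 0. Proof. by rewrite /ev /= mul0r addr0. Qed.

Lemma Nf_arrs s : Nf (arrs phi s) = ev phi (sN s).
Proof. by rewrite /Nf /arrs !o_val // !br_ev /sN evB ev_z0 sub0r !(evM hphi). Qed.
Lemma Df_arrs s : Df (arrs phi s) = ev phi (sD s).
Proof. by rewrite /Df /arrs !o_val // !br_ev /sD !(evM hphi). Qed.

Lemma Lf_arrs al be s : Lf (ev phi al) (ev phi be) (arrs phi s) = ev phi (sL al be s).
Proof. by rewrite /Lf /sL evD (evM hphi al) (evM hphi be) Nf_arrs Df_arrs. Qed.

Lemma Pf_B1 : Pf phi (arrs phi symB1) = 0.
Proof.
have -> : Pf phi (arrs phi symB1) = Lf (ev phi (2, 1)) (ev phi (1, 1)) (arrs phi symB1).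
  by rewrite /Pf; congr Lf; rewrite /ev /=; ring.
by rewrite Lf_arrs -/(sP _) (eqP sP1) ev_z0.
Qed.

Lemma Qf_B2 : Qf phi (arrs phi symB2) = 0.
Proof.
have -> : Qf phi (arrs phi symB2) = Lf (ev phi (2, 1)) (ev phi (3, 1)) (arrs phi symB2) *
   Lf (ev phi (1, -1)) (ev phi (0, -1)) (arrs phi symB2) * Lf (ev phi (1, -1)) (ev phi (2, -1)) (arrs phi symB2).
  by rewrite /Qf; congr (Lf _ _ _ * Lf _ _ _ * Lf _ _ _); rewrite /ev /=; ring.
by rewrite !Lf_arrs -!(evM hphi) -/(sQ _) (eqP sQ2) ev_z0.
Qed.
End Fin.

Local Open Scope complex_scope.
Local Open Scope ring_scope.

Definition sconj (x : zp) : zp := (x.1 - x.2, - x.2).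
Definition sconjv (u : sv) : sv := (sconj u.1.1, sconj u.1.2, sconj u.2).
Definition chk_na (s : seq sv) : bool :=
  has (fun i => all (fun j => svnz (scross (sl s i) (sl symB2 j))) I13) I13.
Lemma chk_na1 : chk_na symB1. Proof. by vm_compute. Qed.
Lemma chk_na2 : chk_na (map sconjv symB1). Proof. by vm_compute. Qed.

Section Main.
Variable R : realType.
Local Notation C := R[i].
Local Notation s5 := (sqrt5 R).
Variable phi : C.
Hypothesis hp : phi = (-1 + s5) / 2 \/ phi = (-1 - s5) / 2.
Let hphi := phi_sq hp.
Let hirr := phi_irr hp.

Definition Q5 (z : C) := exists a b : rat, z = ratr a + ratr b * s5.

Lemma ev_Q5 x : Q5 (ev phi x).
Proof.
have h2 := two_nz R.
case: hp => ->; [exists (x.1%:~R - x.2%:~R / 2), (x.2%:~R / 2) |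
                 exists (x.1%:~R - x.2%:~R / 2), (- (x.2%:~R / 2))];
  rewrite /ev ?rmorphN rmorphB !fmorph_div !rmorph_int (rmorph_nat _ 2); by field.
Qed.

Lemma Q5_closed : subfield_closedP Q5.
Proof.
split.
- by exists 1, 0; rewrite rmorph1 rmorph0 mul0r addr0.
- move=> x y [a [b ->]] [c [d ->]]; exists (a - c), (b - d).
  by rewrite !rmorphB /=; ring.
- move=> x y [a [b ->]] [c [d ->]]; exists (a * c + 5 * (b * d)), (a * d + b * c).
  rewrite !rmorphD !rmorphM /= (rmorph_nat _ 5) /=.
  transitivity (ratr a * ratr c + ratr b * ratr d * s5 ^+ 2 + (ratr a * ratr d + ratr b * ratr c) * s5 : C);
    first by ring.
  by rewrite sqrt5_sq; ring.
- move=> x [a [b ->]].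
  case: (a * a - 5 * (b * b) =P 0) => [hn|/eqP hn].
    have hb : b = 0 by apply: (@rat_sq5 a); apply: subr0_eq.
    move: hn; rewrite hb mulr0 subr0 => /eqP; rewrite mulf_eq0 orbb => /eqP ->.
    by exists 0, 0; rewrite !rmorph0 mul0r addr0 invr0.
  set n := a * a - 5 * (b * b) in hn *.
  exists (a / n), (- b / n).
  have hn' : ratr n != 0 :> C by rewrite fmorph_eq0.
  have hx : (ratr a + ratr b * s5) * (ratr a - ratr b * s5) = ratr n :> C.
    rewrite /n rmorphB !rmorphM /= (rmorph_nat _ 5).
    transitivity (ratr a * ratr a - ratr b * ratr b * s5 ^+ 2 : C); first by ring.
    by rewrite sqrt5_sq; ring.
  have hx0 : ratr a + ratr b * s5 != 0 :> C.
    by apply: contra hn' => /eqP z; rewrite -hx z mul0r.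
  apply: (mulfI hx0); rewrite mulfV //.
  rewrite !fmorph_div rmorphN /=.
  apply/esym; apply: (mulIf hn').
  rewrite mul1r -[RHS]hx; field; exact: hn'.
Qed.

Lemma line_of_entry (a b c : C) (k : 'I_3) : (line_of a b c) 0 k = a \/ (line_of a b c) 0 k = b \/ (line_of a b c) 0 k = c.
Proof. by rewrite mxE; case: k => [[|[|[|k]]] hk] /=; [left | right; left | right; right | by []]. Qed.

Lemma arrs_entry s i k : exists x, arrs phi s i 0 k = ev phi x.
Proof.
rewrite /arrs /evv; case: (line_of_entry (ev phi (sl s i).1.1) (ev phi (sl s i).1.2) (ev phi (sl s i).2) k).
  by move=> ->; eexists.
by case=> ->; eexists.
Qed.

Lemma P_ratr (P : C -> Prop) : subfield_closedP P -> forall a : rat, P (ratr a).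
Proof.
case=> h1 hB hM hV.
have h0 : P 0 by rewrite -(subrr 1); apply: (hB).
have hN : forall x, P x -> P (- x) by move=> x hx; rewrite -sub0r; apply: (hB).
have hD : forall x y, P x -> P y -> P (x + y) by move=> x y hx hy; rewrite -(opprK y); apply: (hB) => //; apply: (hN).
have hn : forall n : nat, P n%:R by elim=> [|n IH]; rewrite ?mulr0n // mulrS; apply: (hD).
have hz : forall z : int, P z%:~R.
  by case=> n; [rewrite -pmulrn; apply: (hn) | rewrite NegzE mulrNz; apply: (hN); rewrite -pmulrn; apply: (hn)].
by move=> a; rewrite /ratr; apply: (hM); [apply: (hz) | apply: (hV); apply: (hz)].
Qed.

Lemma def_field_arrs s : sl s 6 = [v (1,0), (0,1), (-1,0)] -> def_field_Qsqrt5 (arrs phi s).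
Proof.
move=> h6 z; split.
  move=> hz; apply: (hz Q5); first exact: Q5_closed.
  by move=> i k; have [x ->] := arrs_entry s i k; apply: ev_Q5.
case=> a [b ->] P hP hA.
have hphiP : P phi.
  have := hA (o 6) i1; rewrite /arrs o_val // h6 /evv mxE /=.
  by rewrite /ev /= mul1r add0r.
have [h1 hB hM hV] : [/\ P 1, (forall x y, P x -> P y -> P (x - y)),
   (forall x y, P x -> P y -> P (x * y)) & (forall x, P x -> P x^-1)] := hP.
have hs : P s5.
  have h2 := two_nz R.
  have hN : forall x, P x -> P (- x) by move=> x hx; rewrite -sub0r; apply: (hB) => //; rewrite -(subrr 1); apply: (hB).
  have hD : forall x y, P x -> P y -> P (x + y) by move=> x y hx hy; rewrite -(opprK y); apply: (hB) => //; apply: (hN).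
  have h2P : P 2 by rewrite -[2]/(1 + 1); apply: (hD).
  have hq : P (2 * phi + 1) by apply: (hD) => //; apply: (hM).
  case: hp => e.
  - by rewrite (_ : s5 = 2 * phi + 1) // e; field.
  - by rewrite (_ : s5 = - (2 * phi + 1)); [apply: (hN) | rewrite e; field].
have hD : forall x y, P x -> P y -> P (x + y).
  move=> x y hx hy; rewrite -(opprK y); apply: (hB) => //; rewrite -sub0r; apply: (hB) => //.
  by rewrite -(subrr 1); apply: (hB).
by apply: (hD); [apply: P_ratr | apply: (hM) => //; apply: P_ratr].
Qed.

Lemma real_arrs s : real_arr (arrs phi s).
Proof.
move=> i k; have [x ->] := arrs_entry s i k.
have hs : s5 \is Num.real by apply/complex_realP; exists (Num.sqrt (5 : R)).
have h2 : (2 : C) \is Num.real by rewrite realn.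
have hphr : phi \is Num.real.
  by case: hp => ->; rewrite rpredM ?rpredV ?rpredD ?rpredB ?rpredN ?real1.
by rewrite /ev rpredD ?rpredM // realz.
Qed.
End Main.

Local Open Scope complex_scope.
Local Open Scope ring_scope.

Definition comp (u : sv) (k : nat) : zp := nth z0 [:: u.1.1; u.1.2; u.2] k.

Section NA.
Variable R : realType.
Local Notation C := R[i].
Variable phi : C.
Hypothesis hphi : phi ^+ 2 = 1 - phi.
Hypothesis hirr : forall a b : int, a%:~R + b%:~R * phi = 0 -> a = 0 /\ b = 0.

Lemma evv_comp (u : sv) (k : 'I_3) : evv phi u 0 k = ev phi (comp u k).
Proof. by rewrite mxE; case: k => [[|[|[|k]]] hk]. Qed.

Lemma comp_conj (u : sv) (k : 'I_3) : comp (sconjv u) k = sconj (comp u k).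
Proof. by case: k => [[|[|[|k]]] hk]. Qed.

Lemma na_contra s' : chk_na s' ->
  (forall i, exists j, same_line (arrs phi s' i) (arrs phi symB2 j)) -> False.
Proof.
move=> /hasP [i0 hi0 /allP hall] hs.
have hi0' : (i0 < 13)%N by move: hi0; rewrite mem_iota.
have [j hj] := hs (Ordinal hi0').
move: (same_line_cross hj); rewrite /arrs (cross_ev hphi) => /eqP.
rewrite (evv_eq0 hirr) => /negP; apply; apply: hall.
by rewrite mem_iota /= ltn_ord.
Qed.

Lemma not_arith : ~ arithmetic (arrs phi symB1) (arrs phi symB2).
Proof.
case=> F [iota [sigma [A1' [A2' [_ hA1 _ hsame]]]]].
pose q := A1' (o 6) 0 i1.
have hent : forall i k, iota (A1' i 0 k) = arrs phi symB1 i 0 k.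
  by move=> i k; rewrite -hA1 mxE.
have hiq : iota q = phi.
  by rewrite /q hent /arrs o_val // evv_comp /ev /= mul1r add0r.
have hA : forall (i : 'I_13) (k : 'I_3), A1' i 0 k =
    (comp (sl symB1 i) k).1%:~R + (comp (sl symB1 i) k).2%:~R * q.
  move=> i k; apply: (fmorph_inj iota).
  by rewrite hent /arrs evv_comp rmorphD rmorphM !rmorph_int hiq.
have hq : q ^+ 2 + q - 1 = 0.
  apply: (fmorph_inj iota); rewrite rmorph0 rmorphB rmorphD rmorphXn rmorph1 hiq hphi; ring.
pose psi := iota (sigma q).
have hpsi : psi ^+ 2 + psi - 1 = 0.
  have <- : iota (sigma (q ^+ 2 + q - 1)) = psi ^+ 2 + psi - 1.
    by rewrite !rmorphB !rmorphD !rmorphXn !rmorph1.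
  by rewrite hq !rmorph0.
have hconj : forall i k, map_mx (iota \o sigma) (A1' i) 0 k =
    (comp (sl symB1 i) k).1%:~R + (comp (sl symB1 i) k).2%:~R * psi.
  by move=> i k; rewrite mxE /= hA !rmorphD !rmorphM !rmorph_int.
have hfac : (psi - phi) * (psi + phi + 1) = 0.
  transitivity ((psi ^+ 2 + psi - 1) - (phi ^+ 2 + phi - 1)); first by ring.
  by rewrite hpsi hphi; ring.
move/eqP: hfac; rewrite mulf_eq0 => /orP [/eqP e|/eqP e].
- have ep : psi = phi by apply: subr0_eq.
  apply: (na_contra chk_na1) => i.
  have [j hj] := hsame.1 i; exists j.
  suff <- : map_mx (iota \o sigma) (A1' i) = arrs phi symB1 i by [].
  by apply/rowP => k; rewrite hconj /arrs evv_comp ep.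
- have ep : psi = - 1 - phi by apply/eqP; rewrite -subr_eq0 -e; apply/eqP; ring.
  apply: (na_contra chk_na2) => i.
  have [j hj] := hsame.1 i; exists j.
  suff <- : map_mx (iota \o sigma) (A1' i) = arrs phi (map sconjv symB1) i by [].
  apply/rowP => k; rewrite hconj /arrs evv_comp /sl (nth_map sdef); last by have := ltn_ord i.
  rewrite comp_conj /ev /sconj /= ep; rewrite -/(sl _ _). 
  rewrite !rmorphB /=; ring.
Qed.
End NA.

Local Open Scope complex_scope.
Local Open Scope ring_scope.

Section Sep.
Variable R : realType.
Local Notation C := R[i].
Variable phi : C.
Hypothesis hphi : phi ^+ 2 = 1 - phi.
Hypothesis hirr : forall a b : int, a%:~R + b%:~R * phi = 0 -> a = 0 /\ b = 0.
Local Notation A1 := (arrs phi symB1).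
Local Notation A2 := (arrs phi symB2).
Local Notation X := (Xr A1).

Lemma open_zero (F G : ('I_13 -> 'rV[C]_3) -> C) : cont G ->
  (forall A, X A -> (F A = 0 \/ G A = 0) /\ ~ (F A = 0 /\ G A = 0)) ->
  rel_open (realization A1) (fun A => X A /\ F A = 0).
Proof.
move=> hG hd; split; first by move=> A [].
move=> A [hXA hFA].
have hGA : G A <> 0 by move=> h; apply: (proj2 (hd A hXA)).
have he : 0 < nm (G A).
  rewrite lt_def nm_ge0 andbT; apply/eqP => h; apply: hGA; exact: nm_eq0.
have [d hd0 hB] := hG A _ he.
exists (d%:C); split; first by rewrite ltcR.
move=> B hXB hBA; split => //.
have hlt : nm (G B - G A) < nm (G A).
  by apply: hB => i k; have := hBA i k; rewrite nmE ltcR.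
have : G B <> 0 by move=> h0; move: hlt; rewrite h0 sub0r nmN ltxx.
by case: (proj1 (hd B hXB)).
Qed.

Lemma sat_zero (F : ('I_13 -> 'rV[C]_3) -> C) :
  (forall A B, proj_equiv A B -> (F A = 0 <-> F B = 0)) ->
  saturated (realization A1) (fun A => X A /\ F A = 0).
Proof. by move=> hF A B _ hXB hAB [_ hFA]; split => //; apply/(hF A B hAB). Qed.

Lemma not_same_comp : ~ same_component (realization A1) A1 A2.
Proof.
case=> S [hSX hsat hconn hS1 hS2]; apply: hconn.
have hX1 : X A1 by split; [exact: (chk_arr_ok hphi hirr chk_arr1).1 | by []].
have hX2 : X A2 by split; [exact: (chk_arr_ok hphi hirr chk_arr2).1 | exact: same_comb12].
have dich := dichotomy hphi hirr.
exists (fun A => X A /\ Pf phi A = 0), (fun A => X A /\ Qf phi A = 0); split.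
- split.
    by apply: (open_zero (cont_Qf phi)) => A hA; apply: dich.
  by apply: sat_zero => A B hAB; exact: (proj1 (PQ_equiv phi hAB)).
- split.
    apply: (open_zero (cont_Pf phi)) => A hA; have [h1 h2] := dich A hA.
    by split; [case: h1; [right | left] | case=> a b; apply: h2].
  by apply: sat_zero => A B hAB; exact: (proj2 (PQ_equiv phi hAB)).
- by move=> A hA; have hXA := hSX A hA; case: (proj1 (dich A hXA)); [left | right].
- by move=> A hA [hXA hP] [_ hQ]; exact: (proj2 (dich A hXA)).
- split; [exists A1 | exists A2]; split => //; split => //.
  + exact: Pf_B1.
  + exact: Qf_B2.
Qed.
End Sep.

Unset Implicit Arguments.

Theorem theorem3p3 (R : realType) (phi : R[i]) :
  phi = (-1 + sqrt5 R) / 2 \/ phi = (-1 - sqrt5 R) / 2 ->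
  [/\ real_arr (B1 phi), real_arr (B2 phi),
      def_field_Qsqrt5 (B1 phi), def_field_Qsqrt5 (B2 phi) &
      nonarithmetic_pair (B1 phi) (B2 phi)].
Proof.
move=> hp; have hphi := phi_sq hp; have hirr := phi_irr hp.
rewrite (B1E phi) (B2E phi); split.
- exact: real_arrs hp _.
- exact: real_arrs hp _.
- by apply: (def_field_arrs hp).
- by apply: (def_field_arrs hp).
split; last exact: not_arith hphi hirr.
split.
- exact: (chk_arr_ok hphi hirr chk_arr1).1.
- exact: (chk_arr_ok hphi hirr chk_arr2).1.
- exact: same_comb12 hphi hirr.
- exact: not_same_comp hphi hirr.
Qed.
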